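(* Let $\mathbb{X}$ be an idempotent semifield as described in the context. Let $n,m\geq1$, let $\bm{p}_{j}=(p_{1j},\ldots,p_{nj})^{T}\in\mathbb{X}^{n}$, $j=1,\ldots,m$, be regular vectors, let $w_{1},\ldots,w_{m}$ be positive reals, let $h_{j},d_{j}\in\mathbb{X}\setminus\{\mathbb{0}\}$, let $c_{1},\ldots,c_{n}$ be nonzero reals, let $\bm{B}=(b_{ik})\in\mathbb{X}^{n\times n}$ (entries may equal $\mathbb{0}$), and let $\bm{f}=(f_{i}),\bm{g}=(g_{i})\in\mathbb{X}^{n}$ be regular with $\bm{f}\leq\bm{g}$. Consider the problem of minimizing over regular $\bm{x}=(x_{i})\in\mathbb{X}^{n}$ $$\bigoplus_{1\leq j\leq m}h_{j}(\bm{p}_{j}^{-}\bm{x}\oplus\bm{x}^{-}\bm{p}_{j})^{w_{j}}$$ subject to $\bm{p}_{j}^{-}\bm{x}\oplus\bm{x}^{-}\bm{p}_{j}\leq d_{j}$ ($j=1,\ldots,m$), $b_{ik}x_{k}^{c_{k}}\leq x_{i}^{c_{i}}$ ($i,k=1,\ldots,n$), and $\bm{f}\leq\bm{x}\leq\bm{g}$. Define vectors $\bm{s}=(s_{i})$, $\bm{t}=(t_{i})$ by $$s_{i}=\bigoplus_{1\leq j\leq m}d_{j}^{-|c_{i}|}p_{ij}^{c_{i}}\oplus(f_{i}^{-c_{i}}\oplus g_{i}^{-c_{i}})^{-1},\qquad t_{i}^{-1}=\bigoplus_{1\leq j\leq m}d_{j}^{-|c_{i}|}p_{ij}^{-c_{i}}\oplus(f_{i}^{c_{i}}\oplus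 g_{i}^{c_{i}})^{-1}.$$ Suppose (1) $\mathrm{Tr}(\bm{B})\leq\mathbb{1}$ and (2) $\bm{t}^{-}\bm{B}^{\ast}\bm{s}\leq\mathbb{1}$. Then the minimum value of the problem is $$\theta=\bigoplus_{1\leq i,k\leq n}\bigoplus_{1\leq j,l\leq m}\bigg(h_{j}^{\frac{|c_{i}|w_{l}}{|c_{i}|w_{l}+|c_{k}|w_{j}}}h_{l}^{\frac{|c_{k}|w_{j}}{|c_{i}|w_{l}+|c_{k}|w_{j}}}(p_{ij}^{-c_{i}}b_{ik}^{\ast}p_{kl}^{c_{k}})^{\frac{w_{j}w_{l}}{|c_{i}|w_{l}+|c_{k}|w_{j}}}\oplus h_{j}(p_{ij}^{-c_{i}}b_{ik}^{\ast}s_{k})^{w_{j}/|c_{i}|}\oplus h_{l}(t_{i}^{-1}b_{ik}^{\ast}p_{kl}^{c_{k}})^{w_{l}/|c_{k}|}\bigg),$$ where $b_{ik}^{\ast}$ are the entries of $\bm{B}^{\ast}$. Moreover, with vectors $\bm{q}=(q_{i})$, $\bm{r}=(r_{i})$ given by $$q_{i}=\bigoplus_{1\leq j\leq m}\theta^{-|c_{i}|/w_{j}}h_{j}^{|c_{i}|/w_{j}}p_{ij}^{c_{i}},\qquad r_{i}^{-1}=\bigoplus_{1\leq j\leq m}\theta^{-|c_{i}|/w_{j}}h_{j}^{|c_{i}|/w_{j}}p_{ij}^{-c_{i}},$$ all solution vectors $\bm{x}=(x_{i})$ have entries $x_{i}=y_{i}^{1/c_{i}}$, $i=1,\ldots,n$,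 where $\bm{y}=(y_{i})=\bm{B}^{\ast}\bm{v}$ and the parameter vector $\bm{v}$ satisfies $\bm{q}\oplus\bm{s}\leq\bm{v}\leq((\bm{r}^{-}\oplus\bm{t}^{-})\bm{B}^{\ast})^{-}$.
   Context: An idempotent semifield $(\mathbb{X},\oplus,\otimes,\mathbb{0},\mathbb{1})$ is a set with distinct elements $\mathbb{0},\mathbb{1}$ such that $(\mathbb{X},\oplus,\mathbb{0})$ is a commutative idempotent monoid, $(\mathbb{X}\setminus\{\mathbb{0}\},\otimes,\mathbb{1})$ is an abelian group, and $\otimes$ distributes over $\oplus$. The relation $x\leq y\iff x\oplus y=y$ is assumed to be a total order. The sign $\otimes$ is omitted; $x^{-1}$ is the inverse of $x\neq\mathbb{0}$. Powers $x^{p}$ with real exponents are assumed well defined (with $\mathbb{0}^{p}=\mathbb{0}$ for $p>0$) and obey the usual power rules. Main example: max-plus $(\mathbb{R}\cup\{-\infty\},\max,+,-\infty,0)$ with $x^{p}=px$. Vector/matrix operations use $\oplus,\otimes$; inequalities are componentwise; a vector is regular if it has no $\mathbb{0}$ entries. For nonzero $\bm{x}=(x_{i})$, $\bm{x}^{-}$ is the transposed vector with entries $x_{i}^{-1}$ if $x_{i}\neq\mathbb{0}$ and $\mathbb{0}$ otherwise. $\bm{I}$ is the identity matrix, $\bm{B}^{0}=\bm{I}$, $\bm{B}^{p}=\bm{B}\bm{B}^{p-1}$; $\mathrm{tr}\,\bm{B}=b_{11}\oplus\cdots\oplus b_{nn}$, $\mathrm{Tr}(\bm{B})=\mathrm{tr}\,\bm{B}\oplus\cdots\oplus\mathrm{tr}\,\bm{B}^{n}$,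 and $\bm{B}^{\ast}=\bm{I}\oplus\bm{B}\oplus\cdots\oplus\bm{B}^{n-1}$. *)

(* Defs.v *)
From mathcomp Require Import all_boot.
From Stdlib Require Import Reals.

Set Implicit Arguments.
Unset Strict Implicit.
Unset Printing Implicit Defensive.

(* The inverse of zero is fixed to zero (a convention;
   it only matters for the "conjugate" x^- of vectors, where the paper puts
   zero entries for zero components). *)
Record idem_semifield := IdemSemifield {
  sf_car :> Type;
  sf_zero : sf_car;
  sf_one : sf_car;
  sf_add : sf_car -> sf_car -> sf_car;
  sf_mul : sf_car -> sf_car -> sf_car;
  sf_inv : sf_car -> sf_car;
  sf_pow : sf_car -> R -> sf_car;
  sf_zero_neq_one : sf_zero <> sf_one;
  sf_addA : forall x y z, sf_add x (sf_add y z) = sf_add (sf_add x y) z;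
  sf_addC : forall x y, sf_add x y = sf_add y x;
  sf_add0x : forall x, sf_add sf_zero x = x;
  sf_addxx : forall x, sf_add x x = x;
  sf_mulA : forall x y z, sf_mul x (sf_mul y z) = sf_mul (sf_mul x y) z;
  sf_mulC : forall x y, sf_mul x y = sf_mul y x;
  sf_mul1x : forall x, sf_mul sf_one x = x;
  sf_mul0x : forall x, sf_mul sf_zero x = sf_zero;
  sf_mulV : forall x, x <> sf_zero -> sf_mul x (sf_inv x) = sf_one;
  sf_inv0 : sf_inv sf_zero = sf_zero;
  sf_mulDr : forall x y z, sf_mul x (sf_add y z) = sf_add (sf_mul x y) (sf_mul x z);
  sf_le_total : forall x y, sf_add x y = y \/ sf_add x y = x;
  sf_pow1 : forall x, x <> sf_zero -> sf_pow x 1%R = x;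
  sf_powD : forall x p q, x <> sf_zero ->
      sf_pow x (p + q)%R = sf_mul (sf_pow x p) (sf_pow x q);
  sf_powM : forall x p q, x <> sf_zero ->
      sf_pow (sf_pow x p) q = sf_pow x (p * q)%R;
  sf_powMl : forall x y p, x <> sf_zero -> y <> sf_zero ->
      sf_pow (sf_mul x y) p = sf_mul (sf_pow x p) (sf_pow y p);
  sf_pow0 : forall p, (0 < p)%R -> sf_pow sf_zero p = sf_zero;
  sf_pow_mono : forall x y p, x <> sf_zero -> sf_add x y = y -> (0 < p)%R ->
      sf_add (sf_pow x p) (sf_pow y p) = sf_pow y p
}.

Section Defs.
Variable S : idem_semifield.

Definition sle (x y : S) : Prop := sf_add x y = y.

Definition bsum (k : nat) (F : 'I_k -> S) : S :=
  \big[@sf_add S / @sf_zero S]_(i < k) F i.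

Definition regular (n : nat) (x : 'I_n -> S) : Prop :=
  forall i, x i <> sf_zero S.

Definition mxmul n (A B : 'I_n -> 'I_n -> S) : 'I_n -> 'I_n -> S :=
  fun i k => bsum (fun j => sf_mul (A i j) (B j k)).
Definition mxid n : 'I_n -> 'I_n -> S :=
  fun i k => if i == k then sf_one S else sf_zero S.
Definition mxpow n (B : 'I_n -> 'I_n -> S) (p : nat) : 'I_n -> 'I_n -> S :=
  iter p (mxmul B) (@mxid n).
Definition kstar n (B : 'I_n -> 'I_n -> S) : 'I_n -> 'I_n -> S :=
  fun i k => bsum (fun p : 'I_n => mxpow B p i k).
Definition mxtr n (B : 'I_n -> 'I_n -> S) : S := bsum (fun i => B i i).
Definition Tr n (B : 'I_n -> 'I_n -> S) : S :=
  bsum (fun k : 'I_n => mxtr (mxpow B k.+1)).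

Variables (n m : nat).
Variables (p : 'I_n -> 'I_m -> S) (w : 'I_m -> R) (h d : 'I_m -> S)
  (c : 'I_n -> R) (B : 'I_n -> 'I_n -> S) (f g : 'I_n -> S).

Definition dist (x : 'I_n -> S) (j : 'I_m) : S :=
  sf_add (bsum (fun i => sf_mul (sf_inv (p i j)) (x i)))
         (bsum (fun i => sf_mul (sf_inv (x i)) (p i j))).

Definition objective (x : 'I_n -> S) : S :=
  bsum (fun j => sf_mul (h j) (sf_pow (dist x j) (w j))).

Definition feasible (x : 'I_n -> S) : Prop :=
  regular x /\
  (forall j, sle (dist x j) (d j)) /\
  (forall i k, sle (sf_mul (B i k) (sf_pow (x k) (c k))) (sf_pow (x i) (c i))) /\
  (forall i, sle (f i) (x i) /\ sle (x i) (g i)).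

Definition svec (i : 'I_n) : S :=
  sf_add (bsum (fun j => sf_mul (sf_pow (d j) (- Rabs (c i))%R) (sf_pow (p i j) (c i))))
         (sf_inv (sf_add (sf_pow (f i) (- c i)%R) (sf_pow (g i) (- c i)%R))).

Definition tinv (i : 'I_n) : S :=
  sf_add (bsum (fun j => sf_mul (sf_pow (d j) (- Rabs (c i))%R) (sf_pow (p i j) (- c i)%R)))
         (sf_inv (sf_add (sf_pow (f i) (c i)) (sf_pow (g i) (c i)))).

Definition theta : S :=
  bsum (fun i => bsum (fun k => bsum (fun j => bsum (fun l =>
    let D := (Rabs (c i) * w l + Rabs (c k) * w j)%R in
    let bs := kstar B i k in
    sf_add
      (sf_mul (sf_mul (sf_pow (h j) (Rabs (c i) * w l / D)%R)
                      (sf_pow (h l) (Rabs (c k) * w j / D)%R))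
              (sf_pow (sf_mul (sf_mul (sf_pow (p i j) (- c i)%R) bs) (sf_pow (p k l) (c k)))
                      (w j * w l / D)%R))
      (sf_add
        (sf_mul (h j) (sf_pow (sf_mul (sf_mul (sf_pow (p i j) (- c i)%R) bs) (svec k))
                              (w j / Rabs (c i))%R))
        (sf_mul (h l) (sf_pow (sf_mul (sf_mul (tinv i) bs) (sf_pow (p k l) (c k)))
                              (w l / Rabs (c k))%R))))))).

Definition qvec (i : 'I_n) : S :=
  bsum (fun j => sf_mul (sf_mul (sf_pow theta (- Rabs (c i) / w j)%R)
                                (sf_pow (h j) (Rabs (c i) / w j)%R))
                        (sf_pow (p i j) (c i))).

Definition rinv (i : 'I_n) : S :=
  bsum (fun j => sf_mul (sf_mul (sf_pow theta (- Rabs (c i) / w j)%R)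
                                (sf_pow (h j) (Rabs (c i) / w j)%R))
                        (sf_pow (p i j) (- c i)%R)).

Definition uvec (k : 'I_n) : S :=
  sf_inv (bsum (fun i => sf_mul (sf_add (rinv i) (tinv i)) (kstar B i k))).

End Defs.

(* Main.v *)
Require Import Defs.
From mathcomp Require Import all_boot.
From Stdlib Require Import Reals Lra Classical.
From HB Require Import structures.
Set Implicit Arguments.
Unset Strict Implicit.
Unset Printing Implicit Defensive.

Section Basics.
Variable S : idem_semifield.
HB.instance Definition _ := Monoid.isComLaw.Build (sf_car S) (sf_zero S) (@sf_add S) (@sf_addA S) (@sf_addC S) (@sf_add0x S).
Lemma srth : semi_ring_theory (sf_zero S) (sf_one S) (@sf_add S) (@sf_mul S) (@eq S).
Proof. constructor.
 exact: sf_add0x. exact: sf_addC. exact: sf_addA. exact: sf_mul1x. exact: sf_mul0x. exact: sf_mulC. exact: sf_mulA.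
 move=> x y z; rewrite sf_mulC sf_mulDr (sf_mulC z) (sf_mulC z) //. Qed.
Add Ring sring : srth.

Local Notation "0s" := (sf_zero S).
Local Notation "1s" := (sf_one S).
Local Notation "x ⊕ y" := (sf_add x y) (at level 50, left associativity).
Local Notation "x ⊗ y" := (sf_mul x y) (at level 40, left associativity).
Local Notation "x ≼ y" := (sle x y) (at level 70).
Local Notation "x ^^ q" := (sf_pow x q) (at level 29).
Local Notation inv := (@sf_inv S).

Implicit Types x y z a b : S.

Lemma addx0 x : x ⊕ 0s = x. Proof. by rewrite sf_addC sf_add0x. Qed.
Lemma mulx1 x : x ⊗ 1s = x. Proof. by rewrite sf_mulC sf_mul1x. Qed.
Lemma mulx0 x : x ⊗ 0s = 0s. Proof. by rewrite sf_mulC sf_mul0x. Qed.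
Lemma mulDl x y z : (x ⊕ y) ⊗ z = x ⊗ z ⊕ y ⊗ z. Proof. ring. Qed.

Lemma le_refl x : x ≼ x. Proof. exact: sf_addxx. Qed.
Lemma le_trans x y z : x ≼ y -> y ≼ z -> x ≼ z.
Proof. rewrite /sle => H1 H2. by rewrite -H2 sf_addA H1. Qed.
Lemma le_anti x y : x ≼ y -> y ≼ x -> x = y.
Proof. rewrite /sle => H1 H2. by rewrite -H2 sf_addC H1. Qed.
Lemma le_total x y : x ≼ y \/ y ≼ x.
Proof. rewrite /sle; case: (sf_le_total x y); [by left|by rewrite sf_addC; right]. Qed.
Lemma le0 x : 0s ≼ x. Proof. exact: sf_add0x. Qed.
Lemma le_addl x y : x ≼ x ⊕ y. Proof. by rewrite /sle sf_addA sf_addxx. Qed.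
Lemma le_addr x y : y ≼ x ⊕ y. Proof. by rewrite sf_addC; apply: le_addl. Qed.
Lemma add_le x y z : x ≼ z -> y ≼ z -> x ⊕ y ≼ z.
Proof. rewrite /sle => H1 H2. by rewrite -sf_addA H2 H1. Qed.
Lemma add_leE x y z : x ⊕ y ≼ z <-> x ≼ z /\ y ≼ z.
Proof. split; last by case; apply: add_le.
move=> H; split; apply: le_trans H; [apply: le_addl|apply: le_addr]. Qed.
Lemma le_eq x y : x ≼ y -> x ⊕ y = y. Proof. by []. Qed.
Lemma le_eq' x y : y ≼ x -> x ⊕ y = x. Proof. by rewrite sf_addC. Qed.
Lemma le0_eq x : x ≼ 0s -> x = 0s. Proof. by move=> H; apply: le_anti H (le0 _). Qed.

Lemma mul_lel a x y : x ≼ y -> a ⊗ x ≼ a ⊗ y.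
Proof. by rewrite /sle -sf_mulDr => ->. Qed.
Lemma mul_ler a x y : x ≼ y -> x ⊗ a ≼ y ⊗ a.
Proof. rewrite !(sf_mulC _ a); exact: mul_lel. Qed.
Lemma mul_le2 x y u v : x ≼ y -> u ≼ v -> x ⊗ u ≼ y ⊗ v.
Proof. move=> H1 H2; apply: le_trans (mul_ler _ H1) (mul_lel _ H2). Qed.

Lemma mulVx x : x <> 0s -> inv x ⊗ x = 1s. Proof. by move=> H; rewrite sf_mulC sf_mulV. Qed.
Lemma mul_neq0 x y : x <> 0s -> y <> 0s -> x ⊗ y <> 0s.
Proof. move=> Hx Hy H. apply: Hx.
have -> : x = x ⊗ y ⊗ inv y by rewrite -sf_mulA sf_mulV // mulx1.
by rewrite H sf_mul0x. Qed.
Lemma inv_neq0 x : x <> 0s -> inv x <> 0s.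
Proof. move=> Hx H. apply: (@sf_zero_neq_one S). by rewrite -(sf_mulV Hx) H mulx0. Qed.
Lemma mulK x y : x <> 0s -> inv x ⊗ (x ⊗ y) = y.
Proof. by move=> H; rewrite sf_mulA mulVx // sf_mul1x. Qed.
Lemma inv_uniq x y : x ⊗ y = 1s -> x <> 0s -> y = inv x.
Proof. move=> H Hx. by rewrite -(mulK y Hx) H mulx1. Qed.
Lemma invK x : x <> 0s -> inv (inv x) = x.
Proof. move=> Hx; symmetry; apply: inv_uniq; [exact: mulVx | exact: inv_neq0]. Qed.
Lemma invM x y : x <> 0s -> y <> 0s -> inv (x ⊗ y) = inv x ⊗ inv y.
Proof. move=> Hx Hy; symmetry; apply: inv_uniq; last exact: mul_neq0.
have -> : x ⊗ y ⊗ (inv x ⊗ inv y) = (x ⊗ inv x) ⊗ (y ⊗ inv y) by ring.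
by rewrite !sf_mulV // mulx1. Qed.
Lemma inv1 : inv 1s = 1s.
Proof. symmetry; apply: inv_uniq; [by rewrite mulx1| exact: not_eq_sym (@sf_zero_neq_one S)]. Qed.
Lemma one_neq0 : 1s <> 0s. Proof. exact: not_eq_sym (@sf_zero_neq_one S). Qed.

Lemma mul_le_cancel a x y : a <> 0s -> (a ⊗ x ≼ a ⊗ y <-> x ≼ y).
Proof. move=> Ha; split; last exact: mul_lel.
move=> H; rewrite -(mulK x Ha) -(mulK y Ha); exact: mul_lel. Qed.
Lemma le_mulV a x y : a <> 0s -> (a ⊗ x ≼ y <-> x ≼ inv a ⊗ y).
Proof. move=> Ha; rewrite -(mul_le_cancel _ _ (inv_neq0 Ha)) mulK //. Qed.
Lemma le_mulV1 a x : a <> 0s -> (a ⊗ x ≼ 1s <-> x ≼ inv a).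
Proof. move=> Ha; rewrite le_mulV // mulx1 //. Qed.
Lemma le_mulVr a x y : a <> 0s -> (x ≼ a ⊗ y <-> inv a ⊗ x ≼ y).
Proof. move=> Ha; rewrite -(mul_le_cancel _ _ (inv_neq0 Ha)) mulK //. Qed.
Lemma le_inv x y : x <> 0s -> y <> 0s -> (x ≼ y <-> inv y ≼ inv x).
Proof. move=> Hx Hy.
rewrite -(mul_le_cancel _ _ (mul_neq0 (inv_neq0 Hx) (inv_neq0 Hy))).
have -> : inv x ⊗ inv y ⊗ x = inv y ⊗ (inv x ⊗ x) by ring.
have -> : inv x ⊗ inv y ⊗ y = inv x ⊗ (inv y ⊗ y) by ring.
by rewrite !mulVx // !mulx1. Qed.
Lemma add_neq0l x y : x <> 0s -> x ⊕ y <> 0s.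
Proof. move=> Hx H; apply: Hx; apply: le0_eq; rewrite -H; exact: le_addl. Qed.
Lemma add_neq0r x y : y <> 0s -> x ⊕ y <> 0s.
Proof. by rewrite sf_addC; apply: add_neq0l. Qed.
Lemma le_neq0 x y : x <> 0s -> x ≼ y -> y <> 0s.
Proof. by move=> Hx H Hy; apply: Hx; apply: le0_eq; rewrite -Hy. Qed.

Lemma pow0r x : x <> 0s -> x ^^ 0 = 1s.
Proof. move=> Hx.
have H : x ⊗ (x ^^ 0) = x ⊗ 1s by rewrite mulx1 -{1 3}(sf_pow1 Hx) -sf_powD // Rplus_0_r.
by rewrite -(mulK (x ^^ 0) Hx) H mulK. Qed.
Lemma powN x q : x <> 0s -> x ^^ (- q) = inv (x ^^ q).
Proof. move=> Hx; apply: inv_uniq.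
  by rewrite -sf_powD // Rplus_opp_r pow0r.
move=> H; apply: one_neq0. by rewrite -(pow0r Hx) -(Rplus_opp_r q) sf_powD // H sf_mul0x. Qed.
Lemma pow_neq0 x q : x <> 0s -> x ^^ q <> 0s.
Proof. move=> Hx H; apply: one_neq0. by rewrite -(pow0r Hx) -(Rplus_opp_r q) sf_powD // H sf_mul0x. Qed.
Lemma inv_pow x : x <> 0s -> inv x = x ^^ (-1).
Proof. by move=> Hx; rewrite powN // sf_pow1. Qed.
Lemma pow_inv x q : x <> 0s -> (inv x) ^^ q = x ^^ (- q).
Proof. move=> Hx; rewrite inv_pow // sf_powM //; congr sf_pow; ring. Qed.
Lemma pow1s q : 1s ^^ q = 1s.
Proof. have H : 1s ^^ q ⊗ 1s ^^ q = 1s ^^ q ⊗ 1s.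
  by rewrite -sf_powMl ?mulx1 //; apply: one_neq0.
have Hn := pow_neq0 (q:=q) one_neq0.
by rewrite -(mulK (1s ^^ q) Hn) H mulK. Qed.
Lemma powK x q : x <> 0s -> q <> 0%R -> (x ^^ q) ^^ (1 / q) = x.
Proof. move=> Hx Hq; rewrite sf_powM //. have -> : (q * (1/q) = 1)%R by field. exact: sf_pow1. Qed.
Lemma pow_le x y q : (0 < q)%R -> x ≼ y -> x ^^ q ≼ y ^^ q.
Proof. move=> Hq Hxy. case: (classic (x = 0s)) => [->|Hx].
  rewrite sf_pow0 //; exact: le0.
exact: sf_pow_mono. Qed.

Lemma pow_le_iff x y q : (0 < q)%R -> x <> 0s -> y <> 0s -> (x ^^ q ≼ y ^^ q <-> x ≼ y).
Proof. move=> Hq Hx Hy; split; last exact: pow_le.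
move=> H. rewrite -(powK Hx (Rgt_not_eq _ _ Hq)) -(powK Hy (Rgt_not_eq _ _ Hq)).
apply: pow_le H. apply: Rdiv_lt_0_compat; lra. Qed.
Lemma pow_le_iffN x y q : (q < 0)%R -> x <> 0s -> y <> 0s -> (x ^^ q ≼ y ^^ q <-> y ≼ x).
Proof. move=> Hq Hx Hy.
have -> : x ^^ q = inv (x ^^ (-q)) by rewrite -powN // Ropp_involutive.
have -> : y ^^ q = inv (y ^^ (-q)) by rewrite -powN // Ropp_involutive.
rewrite -le_inv; try apply: pow_neq0 => //. apply: pow_le_iff => //. lra. Qed.
Lemma pow_mulz x y q : (0 < q)%R -> (x ⊗ y) ^^ q = x ^^ q ⊗ y ^^ q.
Proof. move=> Hq. case: (classic (x = 0s)) => [->|Hx]; first by rewrite sf_mul0x sf_pow0 // sf_mul0x.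
case: (classic (y = 0s)) => [->|Hy]; first by rewrite mulx0 sf_pow0 // mulx0.
exact: sf_powMl. Qed.
Lemma pow_add x y q : (0 < q)%R -> (x ⊕ y) ^^ q = x ^^ q ⊕ y ^^ q.
Proof. move=> Hq. case: (le_total x y) => H.
  by rewrite (le_eq H) (le_eq (pow_le Hq H)).
by rewrite (le_eq' H) (le_eq' (pow_le Hq H)). Qed.
Lemma pow_mul_inv x q : x <> 0s -> x ^^ q ⊗ x ^^ (- q) = 1s.
Proof. move=> Hx; by rewrite -sf_powD // Rplus_opp_r pow0r. Qed.

Lemma le_bsum k (F : 'I_k -> S) i : F i ≼ bsum F.
Proof. rewrite /sle /bsum (bigD1 i) //= sf_addA sf_addxx //. Qed.
Lemma bsum_le k (F : 'I_k -> S) a : (forall i, F i ≼ a) -> bsum F ≼ a.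
Proof. move=> H; rewrite /bsum; apply: (big_ind (fun x => x ≼ a)) => //.
  exact: le0. by move=> x y; apply: add_le. Qed.
Lemma bsum_leE k (F : 'I_k -> S) a : bsum F ≼ a <-> forall i, F i ≼ a.
Proof. split; last exact: bsum_le. move=> H i; apply: le_trans H; exact: le_bsum. Qed.
Lemma bsum_neq0 k (F : 'I_k -> S) i : F i <> 0s -> bsum F <> 0s.
Proof. move=> H; apply: le_neq0 H (le_bsum F i). Qed.
Lemma mul_bsumr k (F : 'I_k -> S) a : a ⊗ bsum F = bsum (fun i => a ⊗ F i).
Proof. rewrite /bsum. apply: (big_morph (fun x => a ⊗ x)). by move=> x y; rewrite sf_mulDr. exact: mulx0. Qed.
Lemma mul_bsuml k (F : 'I_k -> S) a : bsum F ⊗ a = bsum (fun i => F i ⊗ a).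
Proof. rewrite sf_mulC mul_bsumr; apply: eq_bigr => i _; exact: sf_mulC. Qed.
Lemma bsum_mono k (F G : 'I_k -> S) : (forall i, F i ≼ G i) -> bsum F ≼ bsum G.
Proof. move=> H; apply: bsum_le => i; apply: le_trans (H i) _; exact: le_bsum. Qed.
Lemma bsum_ext k (F G : 'I_k -> S) : (forall i, F i = G i) -> bsum F = bsum G.
Proof. by move=> H; apply: eq_bigr => i _. Qed.
Lemma mul_bsum_le1 k (F : 'I_k -> S) a b : (bsum F ⊗ a ≼ b) <-> forall i, F i ⊗ a ≼ b.
Proof. by rewrite mul_bsuml bsum_leE. Qed.
Lemma mul_bsum_ler k (F : 'I_k -> S) a b : (a ⊗ bsum F ≼ b) <-> forall i, a ⊗ F i ≼ b.
Proof. by rewrite mul_bsumr bsum_leE. Qed.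


Section Walks.
Variable n : nat.
Variable B : 'I_n -> 'I_n -> S.

Fixpoint wt (i : 'I_n) (s : seq 'I_n) : S :=
  match s with [::] => 1s | j :: s' => B i j ⊗ wt j s' end.

Lemma wt_cat i s1 s2 : wt i (s1 ++ s2) = wt i s1 ⊗ wt (last i s1) s2.
Proof. elim: s1 i => [|j s1 IH] i /=; first by rewrite sf_mul1x.
by rewrite IH sf_mulA. Qed.

Lemma mxpowS L : mxpow B L.+1 = mxmul B (mxpow B L). Proof. by []. Qed.

Lemma wt_le_pow i s : wt i s ≼ mxpow B (size s) i (last i s).
Proof. elim: s i => [|j s IH] i.
  rewrite /mxpow /= /mxid eqxx; exact: le_refl.
change (B i j ⊗ wt j s ≼ mxmul B (mxpow B (size s)) i (last j s)). rewrite /mxmul. apply: le_trans (le_bsum _ j). exact: mul_lel. Qed.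

Lemma pow_le_walks L : forall cc i k a,
  (forall s, size s = L -> last i s = k -> cc ⊗ wt i s ≼ a) -> cc ⊗ mxpow B L i k ≼ a.
Proof. elim: L => [|L IH] cc i k a H.
  rewrite /mxpow /= /mxid. case: eqP => [E|_]; last by rewrite mulx0; apply: le0.
  exact: (H [::]).
rewrite mxpowS /mxmul mul_bsum_ler => j. rewrite sf_mulA. apply: IH => s Hs Hl.
rewrite -sf_mulA. apply: (H (j :: s)) => //=. by rewrite Hs. Qed.

Lemma last_take (x : 'I_n) (s : seq 'I_n) (r : nat) : (r <= size s)%N -> last x (take r s) = nth x (x :: s) r.
Proof. elim: s x r => [|j s IH] x [|r] //= Ha.
rewrite IH //. apply: set_nth_default => /=. by rewrite ltnS. Qed.

Hypothesis HTr : Tr B ≼ 1s.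

Lemma kstar_pow_lt L i k : (L < n)%N -> mxpow B L i k ≼ kstar B i k.
Proof. move=> HL. exact: (le_bsum (fun p : 'I_n => mxpow B p i k) (Ordinal HL)). Qed.

Lemma closed_walk_le1 u s : (0 < size s <= n)%N -> last u s = u -> wt u s ≼ 1s.
Proof. case/andP=> H1 H2 Hl. apply: le_trans (wt_le_pow u s) _. rewrite Hl.
have Hk : ((size s).-1 < n)%N by rewrite prednK.
apply: le_trans HTr. rewrite /Tr.
apply: le_trans (le_bsum _ (Ordinal Hk)).
have E : (nat_of_ord (Ordinal Hk)).+1 = size s by rewrite /= prednK.
rewrite E /mxtr.
exact: (le_bsum (fun i => mxpow B (size s) i i) u). Qed.

Lemma walk_le_kstar L : forall i s, size s = L -> wt i s ≼ kstar B i (last i s).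
Proof. elim/ltn_ind: L => L IH i s Hs.
case: (ltnP L n) => HLn.
  apply: le_trans (wt_le_pow i s) _. rewrite Hs. exact: kstar_pow_lt.
set v := i :: s.
have Hsz : size (take n.+1 v) = n.+1 by rewrite size_takel //= Hs ltnS.
have Hnu : ~~ uniq (take n.+1 v).
  apply/negP => Hu. have := card_uniqP Hu. rewrite Hsz => Hc.
  have := max_card (mem (take n.+1 v)). rewrite Hc card_ord ltnn //.
case/(uniqPn i): Hnu => ia [ib [Hab Hb Heq]].
rewrite Hsz in Hb. rewrite !nth_take // in Heq; last exact: ltn_trans Hab Hb.
have Hbs : (ib <= size s)%N by rewrite Hs; apply: leq_trans HLn; rewrite -ltnS.
have Has : (ia <= size s)%N by apply: leq_trans Hbs; apply: ltnW.
set s1 := take ia s. set s2 := take (ib - ia) (drop ia s). set s3 := drop ib s.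
have Ht : take ib s = s1 ++ s2 by rewrite /s1 /s2 -takeD subnKC // ltnW.
have Es : s = (s1 ++ s2) ++ s3 by rewrite -Ht cat_take_drop.
have Hl1 : last i s1 = nth i v ia by rewrite /s1 last_take.
have Hl2 : last i (s1 ++ s2) = nth i v ib by rewrite -Ht last_take.
have Hc : wt (last i s1) s2 ≼ 1s.
  apply: closed_walk_le1; last by rewrite -last_cat Hl2 Hl1 Heq.
  rewrite /s2 size_takel; last by rewrite size_drop leq_sub2r.
  rewrite subn_gt0 Hab /=. apply: leq_trans (leq_subr _ _) _. by rewrite -ltnS.
have Hlast : last i s = last i (s1 ++ s3) by rewrite {1}Es last_cat Hl2 last_cat Hl1 Heq.
have Hw : wt i s ≼ wt i (s1 ++ s3).
  rewrite {1}Es wt_cat wt_cat Hl2 wt_cat Hl1 -Heq.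
  rewrite -{2}(mulx1 (wt i s1)). apply: mul_ler. apply: mul_lel. by rewrite -Hl1.
rewrite Hlast. apply: le_trans Hw (IH _ _ _ _ erefl).
rewrite size_cat /s1 /s3 size_takel // size_drop Hs.
have HbL : (ib <= L)%N by rewrite -Hs.
rewrite -(subnKC HbL) addKn. rewrite ltn_add2r //. Qed.

Lemma kstar_pow L i k : mxpow B L i k ≼ kstar B i k.
Proof. rewrite -(sf_mul1x (mxpow B L i k)). apply: pow_le_walks => s Hs Hl.
rewrite sf_mul1x -Hl. exact: walk_le_kstar. Qed.

Lemma cone_kstar (v : 'I_n -> S) i j :
  B i j ⊗ bsum (fun k => kstar B j k ⊗ v k) ≼ bsum (fun k => kstar B i k ⊗ v k).
Proof. rewrite mul_bsum_ler => k. rewrite sf_mulA. apply: le_trans (le_bsum _ k).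
apply: mul_ler. rewrite /kstar mul_bsum_ler => q.
apply: le_trans (kstar_pow q.+1 i k). rewrite mxpowS /mxmul.
exact: (le_bsum (fun j0 => B i j0 ⊗ mxpow B q j0 k) j). Qed.

End Walks.

Section Cone.
Variable n : nat.
Variable B : 'I_n -> 'I_n -> S.
Lemma cone_pow (y : 'I_n -> S) : (forall i j, B i j ⊗ y j ≼ y i) ->
  forall L i k, mxpow B L i k ⊗ y k ≼ y i.
Proof. move=> H; elim=> [|L IH] i k.
  rewrite /mxpow /= /mxid. case: eqP => [->|_]; first by rewrite sf_mul1x; exact: le_refl.
  rewrite sf_mul0x; exact: le0.
rewrite mxpowS /mxmul mul_bsum_le1 => j. rewrite -sf_mulA.
apply: le_trans (H i j). apply: mul_lel. exact: IH. Qed.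
Lemma cone_kstar_le (y : 'I_n -> S) : (forall i j, B i j ⊗ y j ≼ y i) ->
  forall i k, kstar B i k ⊗ y k ≼ y i.
Proof. move=> H i k. rewrite /kstar mul_bsum_le1 => q. exact: cone_pow. Qed.
Lemma kstar_diag i : 1s ≼ kstar B i i.
Proof. have Hn : (0 < n)%N by case: i => [i' Hi]; apply: leq_ltn_trans Hi.
apply: le_trans (le_bsum _ (Ordinal Hn)). rewrite /= /mxpow /= /mxid eqxx. exact: le_refl. Qed.
End Cone.

Lemma zlem (z D : S) (cc : R) : z <> 0s -> D <> 0s -> cc <> 0%R ->
  (z ≼ D /\ inv z ≼ D) <-> (z ^^ cc ≼ D ^^ Rabs cc /\ z ^^ (- cc) ≼ D ^^ Rabs cc).
Proof. move=> Hz HD Hc. have Hiz := inv_neq0 Hz.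
case: (Rlt_or_le 0 cc) => Hc0.
  rewrite Rabs_pos_eq; last lra.
  rewrite -(pow_le_iff Hc0 Hz HD) -(pow_le_iff Hc0 Hiz HD) pow_inv //.
rewrite Rabs_left; last lra.
have Hc1 : (0 < - cc)%R by lra.
rewrite -(pow_le_iff Hc1 Hz HD) -(pow_le_iff Hc1 Hiz HD) pow_inv // Ropp_involutive.
tauto. Qed.

Lemma le_invr (X Y E : S) : X <> 0s -> E <> 0s -> (Y ⊗ inv X ≼ E <-> inv E ⊗ Y ≼ X).
Proof. move=> HX HE. rewrite (sf_mulC Y) le_mulV; last exact: inv_neq0.
rewrite invK // (sf_mulC X) le_mulVr //. Qed.

Lemma pair_iff (pp x D : S) (cc : R) : pp <> 0s -> x <> 0s -> D <> 0s -> cc <> 0%R ->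
  (inv pp ⊗ x ≼ D /\ inv x ⊗ pp ≼ D) <->
  (D ^^ (- Rabs cc) ⊗ pp ^^ cc ≼ x ^^ cc /\ D ^^ (- Rabs cc) ⊗ pp ^^ (- cc) ⊗ x ^^ cc ≼ 1s).
Proof. move=> Hp Hx HD Hc.
have Hz : inv pp ⊗ x <> 0s by apply: mul_neq0 => //; apply: inv_neq0.
have Ei : inv (inv pp ⊗ x) = inv x ⊗ pp.
  rewrite invM //; last exact: inv_neq0. by rewrite invK // sf_mulC.
rewrite -Ei (zlem Hz HD Hc).
rewrite !sf_powMl //; try exact: inv_neq0.
rewrite (pow_inv cc Hp) (pow_inv (-cc) Hp) Ropp_involutive.
have HDc : D ^^ Rabs cc <> 0s by apply: pow_neq0.
rewrite (powN (Rabs cc) HD) (powN cc Hx).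
have Hxc : x ^^ cc <> 0s by apply: pow_neq0.
rewrite (le_invr (pp ^^ cc) Hxc HDc).
rewrite -sf_mulA (le_mulV1 _ (inv_neq0 HDc)) invK //. tauto. Qed.

Lemma key (tau U X : S) (al : R) : tau <> 0s -> U <> 0s -> (0 < al)%R ->
  (tau ^^ (- al) ⊗ U ⊗ X ≼ 1s <-> U ^^ (1 / al) ⊗ X ^^ (1 / al) ≼ tau).
Proof. move=> Ht HU Hal. have Hal' : (0 < 1 / al)%R by apply: Rdiv_lt_0_compat; lra.
case: (classic (X = 0s)) => [->|HX].
  rewrite mulx0 sf_pow0 // mulx0. split=> _; exact: le0.
have Hta := pow_neq0 (q := al) Ht.
rewrite -sf_mulA (powN al Ht) (le_mulV1 _ (inv_neq0 Hta)) invK //.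
rewrite -sf_powMl // -(pow_le_iff Hal' (mul_neq0 HU HX) (pow_neq0 (q:=al) Ht)).
rewrite powK //. lra. Qed.

Lemma termA (tau hj hl Pij Pkl bs : S) (ci ck wj wl : R) :
  tau <> 0s -> hj <> 0s -> hl <> 0s -> (0 < ci)%R -> (0 < ck)%R -> (0 < wj)%R -> (0 < wl)%R ->
  ((tau ^^ (- ci / wj) ⊗ hj ^^ (ci / wj) ⊗ Pij) ⊗ bs ⊗
     (tau ^^ (- ck / wl) ⊗ hl ^^ (ck / wl) ⊗ Pkl) ≼ 1s <->
   hj ^^ (ci * wl / (ci * wl + ck * wj)) ⊗ hl ^^ (ck * wj / (ci * wl + ck * wj)) ⊗
     (Pij ⊗ bs ⊗ Pkl) ^^ (wj * wl / (ci * wl + ck * wj)) ≼ tau).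
Proof. move=> Ht Hj Hl Hci Hck Hwj Hwl.
have HD : (0 < ci * wl + ck * wj)%R by nra.
set al := (ci / wj + ck / wl)%R.
have Hal : (0 < al)%R by rewrite /al; have := Rdiv_lt_0_compat _ _ Hci Hwj; have := Rdiv_lt_0_compat _ _ Hck Hwl; lra.
have E : (tau ^^ (- ci / wj) ⊗ hj ^^ (ci / wj) ⊗ Pij) ⊗ bs ⊗
     (tau ^^ (- ck / wl) ⊗ hl ^^ (ck / wl) ⊗ Pkl) =
   tau ^^ (- al) ⊗ (hj ^^ (ci / wj) ⊗ hl ^^ (ck / wl)) ⊗ (Pij ⊗ bs ⊗ Pkl).
  have -> : (- al = - ci / wj + - ck / wl)%R by rewrite /al; field; lra.
  rewrite sf_powD //. ring.
rewrite E key //; last by apply: mul_neq0; apply: pow_neq0.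
rewrite (@sf_powMl S _ _ (1 / al) (pow_neq0 (q:=ci/wj) Hj) (pow_neq0 (q:=ck/wl) Hl)) !sf_powM //.
have -> : (1 / al = wj * wl / (ci * wl + ck * wj))%R by rewrite /al; field; lra.
have -> : (ci / wj * (wj * wl / (ci * wl + ck * wj)) = ci * wl / (ci * wl + ck * wj))%R by field; lra.
have -> : (ck / wl * (wj * wl / (ci * wl + ck * wj)) = ck * wj / (ci * wl + ck * wj))%R by field; lra.
by []. Qed.

Lemma termB (tau hj Pij bs sk : S) (ci wj : R) :
  tau <> 0s -> hj <> 0s -> (0 < ci)%R -> (0 < wj)%R ->
  ((tau ^^ (- ci / wj) ⊗ hj ^^ (ci / wj) ⊗ Pij) ⊗ bs ⊗ sk ≼ 1s <->
   hj ⊗ (Pij ⊗ bs ⊗ sk) ^^ (wj / ci) ≼ tau).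
Proof. move=> Ht Hj Hci Hwj.
have Hal : (0 < ci / wj)%R by apply: Rdiv_lt_0_compat.
have -> : (- ci / wj = - (ci / wj))%R by field; lra.
have -> : (tau ^^ (- (ci / wj)) ⊗ hj ^^ (ci / wj) ⊗ Pij) ⊗ bs ⊗ sk =
   tau ^^ (- (ci / wj)) ⊗ hj ^^ (ci / wj) ⊗ (Pij ⊗ bs ⊗ sk) by ring.
rewrite key //; last by apply: pow_neq0.
rewrite powK; last lra; last by [].
have -> : (1 / (ci / wj) = wj / ci)%R by field; lra.
by []. Qed.

Lemma termC (tau hl Pkl bs ti : S) (ck wl : R) :
  tau <> 0s -> hl <> 0s -> (0 < ck)%R -> (0 < wl)%R ->
  (ti ⊗ bs ⊗ (tau ^^ (- ck / wl) ⊗ hl ^^ (ck / wl) ⊗ Pkl) ≼ 1s <->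
   hl ⊗ (ti ⊗ bs ⊗ Pkl) ^^ (wl / ck) ≼ tau).
Proof. move=> Ht Hl Hck Hwl.
have -> : ti ⊗ bs ⊗ (tau ^^ (- ck / wl) ⊗ hl ^^ (ck / wl) ⊗ Pkl) =
   (tau ^^ (- ck / wl) ⊗ hl ^^ (ck / wl) ⊗ 1s) ⊗ 1s ⊗ (ti ⊗ bs ⊗ Pkl) by ring.
rewrite termB //. by rewrite !sf_mul1x. Qed.

Lemma bsum2 k1 k2 (A : 'I_k1 -> S) (C : 'I_k2 -> S) Y a :
  (bsum A ⊗ Y ⊗ bsum C ≼ a) <-> forall j l, A j ⊗ Y ⊗ C l ≼ a.
Proof. rewrite mul_bsum_ler. split.
  move=> H j l. have := H l. rewrite -sf_mulA mul_bsum_le1 => /(_ j). by rewrite sf_mulA.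
move=> H l. rewrite -sf_mulA mul_bsum_le1 => j. rewrite sf_mulA. exact: H. Qed.
Lemma bsumL k1 (A : 'I_k1 -> S) Y Z a :
  (bsum A ⊗ Y ⊗ Z ≼ a) <-> forall j, A j ⊗ Y ⊗ Z ≼ a.
Proof. rewrite -sf_mulA mul_bsum_le1. split=> H j; [rewrite -sf_mulA | rewrite sf_mulA]; exact: H. Qed.
Lemma bsumR k2 (C : 'I_k2 -> S) Y Z a :
  (Z ⊗ Y ⊗ bsum C ≼ a) <-> forall l, Z ⊗ Y ⊗ C l ≼ a.
Proof. by rewrite mul_bsum_ler. Qed.
Lemma E4 a0 b0 X c0 d0 : (a0 ⊕ b0) ⊗ X ⊗ (c0 ⊕ d0) =
  a0 ⊗ X ⊗ c0 ⊕ a0 ⊗ X ⊗ d0 ⊕ b0 ⊗ X ⊗ c0 ⊕ b0 ⊗ X ⊗ d0.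
Proof. ring. Qed.

Section Problem.
Local Unset Implicit Arguments.
Variables (n m : nat) (p : 'I_n -> 'I_m -> S) (w : 'I_m -> R) (h d : 'I_m -> S)
  (c : 'I_n -> R) (B : 'I_n -> 'I_n -> S) (f g : 'I_n -> S).
Hypotheses (Hn : (1 <= n)%N) (Hm : (1 <= m)%N)
  (Hp : forall i j, p i j <> 0s) (Hw : forall j, (0 < w j)%R)
  (Hh : forall j, h j <> 0s) (Hd : forall j, d j <> 0s)
  (Hc : forall i, c i <> 0%R) (Hf : regular f) (Hg : regular g)
  (Hfg : forall i, f i ≼ g i).

Lemma dist_iff (x : 'I_n -> S) (D : S) j : regular x -> D <> 0s ->
  (Defs.dist p x j ≼ D <-> forall i, D ^^ (- Rabs (c i)) ⊗ p i j ^^ c i ≼ x i ^^ c i /\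
                                D ^^ (- Rabs (c i)) ⊗ p i j ^^ (- c i) ⊗ x i ^^ c i ≼ 1s).
Proof. move=> Hx HD. rewrite /Defs.dist add_leE !bsum_leE.
have E i := pair_iff (Hp i j) (Hx i) HD (Hc i).
split.
  case=> H1 H2 i. apply/E. by split.
move=> H; split=> i; by case: (proj2 (E i) (H i)). Qed.

Lemma box_iff i (x : S) : x <> 0s ->
  (f i ≼ x /\ x ≼ g i) <->
  (inv (f i ^^ (- c i) ⊕ g i ^^ (- c i)) ≼ x ^^ c i /\ inv (f i ^^ c i ⊕ g i ^^ c i) ⊗ x ^^ c i ≼ 1s).
Proof. move=> Hx. have Hfi := Hf i. have Hgi := Hg i. have Hci := Hc i.
case: (Rlt_or_le 0 (c i)) => Hc0.
  have Hn0 : (- c i < 0)%R by lra.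
  have E1 : g i ^^ (- c i) ≼ f i ^^ (- c i) by apply/(pow_le_iffN Hn0 Hgi Hfi).
  have E2 : f i ^^ c i ≼ g i ^^ c i by apply: pow_le.
  rewrite (le_eq' E1) (le_eq E2) powN // (invK (pow_neq0 (q:=c i) Hfi)).
  rewrite (le_mulV1 _ (inv_neq0 (pow_neq0 (q:=c i) Hgi))) (invK (pow_neq0 (q:=c i) Hgi)).
  rewrite !pow_le_iff //.
have Hcn : (c i < 0)%R by lra.
have Hp0 : (0 < - c i)%R by lra.
have E1 : f i ^^ (- c i) ≼ g i ^^ (- c i) by apply: pow_le.
have E2 : g i ^^ c i ≼ f i ^^ c i by apply/(pow_le_iffN Hcn Hgi Hfi).
rewrite (le_eq E1) (le_eq' E2) powN // (invK (pow_neq0 (q:=c i) Hgi)).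
rewrite (le_mulV1 _ (inv_neq0 (pow_neq0 (q:=c i) Hfi))) (invK (pow_neq0 (q:=c i) Hfi)).
rewrite !pow_le_iffN //. tauto. Qed.


Lemma feas_iff (x : 'I_n -> S) : regular x ->
  (feasible p d c B f g x <->
   (forall i k, B i k ⊗ x k ^^ c k ≼ x i ^^ c i) /\
   forall i, svec p d c f g i ≼ x i ^^ c i /\ tinv p d c f g i ⊗ x i ^^ c i ≼ 1s).
Proof. move=> Hx. rewrite /feasible.
have Es i (y : S) : svec p d c f g i ≼ y <->
   (forall j, d j ^^ (- Rabs (c i)) ⊗ p i j ^^ c i ≼ y) /\
   inv (f i ^^ (- c i) ⊕ g i ^^ (- c i)) ≼ y.
  by rewrite /svec add_leE bsum_leE.
have Et i (y : S) : tinv p d c f g i ⊗ y ≼ 1s <->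
   (forall j, d j ^^ (- Rabs (c i)) ⊗ p i j ^^ (- c i) ⊗ y ≼ 1s) /\
   inv (f i ^^ c i ⊕ g i ^^ c i) ⊗ y ≼ 1s.
  by rewrite /tinv mulDl add_leE mul_bsum_le1.
have Ed j := dist_iff x (d j) j Hx (Hd j).
have Eb i := box_iff i (x i) (Hx i).
split.
  case=> _ [H1 [H2 H3]]. split => // i. rewrite Es Et.
  have [A1 A2] := proj1 (Eb i) (H3 i).
  split; split => // j; have := proj1 (Ed j) (H1 j) i; tauto.
case=> H2 H. split => //. split.
  move=> j; apply/Ed => i. have [Hs Ht] := H i. rewrite Es in Hs. rewrite Et in Ht.
  case: Hs => Hs1 _; case: Ht => Ht1 _. split; [exact: Hs1 | exact: Ht1].
split => // i; apply/Eb. have [Hs Ht] := H i. rewrite Es in Hs. rewrite Et in Ht. tauto. Qed.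

Definition qg (tau : S) (i : 'I_n) : S :=
  bsum (fun j => sf_mul (sf_mul (sf_pow tau (- Rabs (c i) / w j)%R)
                                (sf_pow (h j) (Rabs (c i) / w j)%R))
                        (sf_pow (p i j) (c i))).
Definition rg (tau : S) (i : 'I_n) : S :=
  bsum (fun j => sf_mul (sf_mul (sf_pow tau (- Rabs (c i) / w j)%R)
                                (sf_pow (h j) (Rabs (c i) / w j)%R))
                        (sf_pow (p i j) (- c i)%R)).

Lemma Dpow tau j i : tau <> 0s ->
  ((inv (h j) ⊗ tau) ^^ (1 / w j)) ^^ (- Rabs (c i)) =
  tau ^^ (- Rabs (c i) / w j) ⊗ h j ^^ (Rabs (c i) / w j).
Proof. move=> Ht. have Hhi := inv_neq0 (Hh j).
rewrite sf_powM; last exact: mul_neq0.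
rewrite sf_powMl // pow_inv // sf_mulC. have Hwj := Hw j.
congr (_ ⊗ _); congr sf_pow; field; lra. Qed.

Lemma obj_iff (x : 'I_n -> S) tau : regular x -> tau <> 0s ->
  (objective p w h x ≼ tau <->
   forall i, qg tau i ≼ x i ^^ c i /\ rg tau i ⊗ x i ^^ c i ≼ 1s).
Proof. move=> Hx Ht. rewrite /objective bsum_leE.
set Dj := fun j => (inv (h j) ⊗ tau) ^^ (1 / w j).
have HDj j : Dj j <> 0s by apply: pow_neq0; apply: mul_neq0 => //; apply: inv_neq0.
have i0 : 'I_n := Ordinal Hn.
have Hdist j : Defs.dist p x j <> 0s.
  apply: add_neq0l. apply: (bsum_neq0 (i := i0)). apply: mul_neq0 => //. exact: inv_neq0.
have Ej j : h j ⊗ Defs.dist p x j ^^ w j ≼ tau <-> Defs.dist p x j ≼ Dj j.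
  rewrite le_mulV //.
  have -> : inv (h j) ⊗ tau = Dj j ^^ w j.
    rewrite /Dj sf_powM; last by apply: mul_neq0 => //; apply: inv_neq0.
    have Hwj := Hw j. have -> : (1 / w j * w j = 1)%R by field; lra.
    rewrite sf_pow1 //. by apply: mul_neq0 => //; apply: inv_neq0.
  exact: pow_le_iff.
split.
  move=> H i.
  have Hj j := proj1 (dist_iff x (Dj j) j Hx (HDj j)) (proj1 (Ej j) (H j)) i.
  split.
    rewrite /qg bsum_leE => j. have := (Hj j).1. by rewrite /Dj Dpow.
  rewrite /rg mul_bsum_le1 => j. have := (Hj j).2. by rewrite /Dj Dpow.
move=> H j. apply/Ej. apply/(dist_iff x (Dj j) j Hx (HDj j)) => i.
rewrite /Dj Dpow //. have [H1 H2] := H i.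
rewrite /qg bsum_leE in H1. rewrite /rg mul_bsum_le1 in H2.
split; [exact: H1 j | exact: H2 j]. Qed.

Definition TT i k j l : S :=
    let D := (Rabs (c i) * w l + Rabs (c k) * w j)%R in
    let bs := kstar B i k in
    sf_add
      (sf_mul (sf_mul (sf_pow (h j) (Rabs (c i) * w l / D)%R)
                      (sf_pow (h l) (Rabs (c k) * w j / D)%R))
              (sf_pow (sf_mul (sf_mul (sf_pow (p i j) (- c i)%R) bs) (sf_pow (p k l) (c k)))
                      (w j * w l / D)%R))
      (sf_add
        (sf_mul (h j) (sf_pow (sf_mul (sf_mul (sf_pow (p i j) (- c i)%R) bs) (svec p d c f g k))
                              (w j / Rabs (c i))%R))
        (sf_mul (h l) (sf_pow (sf_mul (sf_mul (tinv p d c f g i) bs) (sf_pow (p k l) (c k)))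
                              (w l / Rabs (c k))%R))).

Lemma theta_eq : theta p w h d c B f g =
  bsum (fun i => bsum (fun k => bsum (fun j => bsum (fun l => TT i k j l)))).
Proof. by []. Qed.

Hypothesis Hts : bsum (fun i => bsum (fun k =>
         sf_mul (sf_mul (tinv p d c f g i) (kstar B i k)) (svec p d c f g k))) ≼ 1s.

Lemma per_ik tau i k : tau <> 0s ->
  ((rg tau i ⊕ tinv p d c f g i) ⊗ kstar B i k ⊗ (qg tau k ⊕ svec p d c f g k) ≼ 1s) <->
  bsum (fun j => bsum (fun l => TT i k j l)) ≼ tau.
Proof. move=> Ht.
have Hci : (0 < Rabs (c i))%R by apply: Rabs_pos_lt.
have Hck : (0 < Rabs (c k))%R by apply: Rabs_pos_lt.
have j0 : 'I_m := Ordinal Hm.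
rewrite E4 !add_leE. split.
  case=> [[[H1 H2] H3] H4].
  apply: bsum_le => j; apply: bsum_le => l. rewrite /TT. cbv zeta. rewrite !add_leE.
  split; [|split].
  - apply/(termA _ _ _ Ht (Hh j) (Hh l) Hci Hck (Hw j) (Hw l)). exact: (proj1 (bsum2 _ _ _ _) H1 j l).
  - apply/(termB _ _ _ Ht (Hh j) Hci (Hw j)). exact: (proj1 (bsumL _ _ _ _) H2 j).
  - apply/(termC _ _ _ Ht (Hh l) Hck (Hw l)). exact: (proj1 (bsumR _ _ _ _) H3 l).
move=> H.
have HT j l : TT i k j l ≼ tau by move/bsum_leE: H => /(_ j) /bsum_leE /(_ l).
split; [split; [split|]|].
- apply/bsum2 => j l. apply/(termA _ _ _ Ht (Hh j) (Hh l) Hci Hck (Hw j) (Hw l)).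
  have := HT j l. rewrite /TT. cbv zeta. rewrite !add_leE. tauto.
- apply/bsumL => j. apply/(termB _ _ _ Ht (Hh j) Hci (Hw j)).
  have := HT j j0. rewrite /TT. cbv zeta. rewrite !add_leE. tauto.
- apply/bsumR => l. apply/(termC _ _ _ Ht (Hh l) Hck (Hw l)).
  have := HT j0 l. rewrite /TT. cbv zeta. rewrite !add_leE. tauto.
- by move/bsum_leE: Hts => /(_ i) /bsum_leE /(_ k).
Qed.

Definition Ssum tau := bsum (fun i => bsum (fun k =>
   (rg tau i ⊕ tinv p d c f g i) ⊗ kstar B i k ⊗ (qg tau k ⊕ svec p d c f g k))).

Lemma C_iff tau : tau <> 0s -> (Ssum tau ≼ 1s <-> theta p w h d c B f g ≼ tau).
Proof. move=> Ht. rewrite theta_eq /Ssum. split.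
  move=> H. apply: bsum_le => i; apply: bsum_le => k. apply/per_ik => //.
  by move/bsum_leE: H => /(_ i) /bsum_leE /(_ k).
move=> H. apply: bsum_le => i; apply: bsum_le => k. apply/per_ik => //.
by move/bsum_leE: H => /(_ i) /bsum_leE /(_ k). Qed.

Hypothesis HTr : Tr B ≼ 1s.
Local Notation th := (theta p w h d c B f g).

Lemma j0m : 'I_m. Proof. exact: Ordinal Hm. Qed.
Lemma i0n : 'I_n. Proof. exact: Ordinal Hn. Qed.

Lemma tinv_neq0 i : tinv p d c f g i <> 0s.
Proof. apply: add_neq0l. apply: (bsum_neq0 (i := j0m)). apply: mul_neq0; exact: pow_neq0. Qed.
Lemma svec_neq0 i : svec p d c f g i <> 0s.
Proof. apply: add_neq0l. apply: (bsum_neq0 (i := j0m)). apply: mul_neq0; exact: pow_neq0. Qed.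
Lemma kstar_neq0 i : kstar B i i <> 0s.
Proof. exact: le_neq0 one_neq0 (kstar_diag B i). Qed.

Lemma theta_neq0 : th <> 0s.
Proof. rewrite theta_eq. apply: (bsum_neq0 (i := i0n)). apply: (bsum_neq0 (i := i0n)).
apply: (bsum_neq0 (i := j0m)). apply: (bsum_neq0 (i := j0m)). rewrite /TT; cbv zeta.
apply: add_neq0r. apply: add_neq0l. apply: mul_neq0 => //. apply: pow_neq0.
apply: mul_neq0; last exact: svec_neq0. apply: mul_neq0; [exact: pow_neq0 | exact: kstar_neq0]. Qed.

Lemma obj_neq0 (x : 'I_n -> S) : regular x -> objective p w h x <> 0s.
Proof. move=> Hx. apply: (bsum_neq0 (i := j0m)). apply: mul_neq0 => //. apply: pow_neq0.
apply: add_neq0l. apply: (bsum_neq0 (i := i0n)). apply: mul_neq0 => //. exact: inv_neq0. Qed.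

Definition Zk k := bsum (fun i => (rg th i ⊕ tinv p d c f g i) ⊗ kstar B i k).
Lemma Zk_neq0 k : Zk k <> 0s.
Proof. apply: (bsum_neq0 (i := k)). apply: mul_neq0; last exact: kstar_neq0.
apply: add_neq0r. exact: tinv_neq0. Qed.
Lemma uvec_eq k : uvec p w h d c B f g k = inv (Zk k). Proof. by []. Qed.
Lemma qvec_eq i : qvec p w h d c B f g i = qg th i. Proof. by []. Qed.
Lemma v_le_u (v : 'I_n -> S) k : v k ≼ uvec p w h d c B f g k <-> Zk k ⊗ v k ≼ 1s.
Proof. by rewrite uvec_eq le_mulV1 //; apply: Zk_neq0. Qed.

Lemma LB (x : 'I_n -> S) : feasible p d c B f g x -> th ≼ objective p w h x.
Proof. move=> Hfe. have Hx : regular x := proj1 Hfe.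
set tau := objective p w h x.
have Ht : tau <> 0s := obj_neq0 x Hx.
have [H1 H2] := proj1 (feas_iff x Hx) Hfe.
have H3 := proj1 (obj_iff x tau Hx Ht) (le_refl _).
apply/(C_iff tau Ht). apply: bsum_le => i; apply: bsum_le => k.
apply: le_trans (_ : (rg tau i ⊕ tinv p d c f g i) ⊗ x i ^^ c i ≼ 1s).
  rewrite -sf_mulA. apply: mul_lel.
  apply: le_trans (cone_kstar_le H1 i k). apply: mul_lel.
  apply: add_le; [exact: (H3 k).1 | exact: (H2 k).1].
rewrite mulDl; apply: add_le; [exact: (H3 i).2 | exact: (H2 i).2]. Qed.

Lemma char_bwd (x v : 'I_n -> S) :
  (forall i, qvec p w h d c B f g i ⊕ svec p d c f g i ≼ v i) ->
  (forall i, v i ≼ uvec p w h d c B f g i) ->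
  (forall i, x i = (bsum (fun k => kstar B i k ⊗ v k)) ^^ (1 / c i)) ->
  feasible p d c B f g x /\ objective p w h x = th.
Proof. move=> Hv1 Hv2 Hx.
set y := fun i => bsum (fun k => kstar B i k ⊗ v k).
have Hvr i : v i <> 0s := le_neq0 (svec_neq0 i) (le_trans (le_addr _ _) (Hv1 i)).
have Hvy i : v i ≼ y i.
  apply: le_trans (le_bsum _ i). rewrite -{1}(sf_mul1x (v i)). apply: mul_ler. exact: kstar_diag.
have Hyr i : y i <> 0s := le_neq0 (Hvr i) (Hvy i).
have Hxr : regular x by rewrite /regular => i; rewrite Hx; exact: pow_neq0 (Hyr i).
have Ey i : x i ^^ c i = y i.
  rewrite Hx. change ((y i ^^ (1 / c i)) ^^ c i = y i).
  rewrite (sf_powM (1 / c i) (c i) (Hyr i)) (_ : (1 / c i * c i = 1)%R); first exact: sf_pow1.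
  by field; apply: Hc.
have Hup i : (rg th i ⊕ tinv p d c f g i) ⊗ y i ≼ 1s.
  rewrite mul_bsum_ler => k. rewrite sf_mulA.
  apply: le_trans (_ : Zk k ⊗ v k ≼ 1s); last by apply/v_le_u.
  apply: mul_ler. exact: (le_bsum (fun i0 => (rg th i0 ⊕ tinv p d c f g i0) ⊗ kstar B i0 k) i).
have Hfe : feasible p d c B f g x.
  apply/(feas_iff x Hxr). split.
    move=> i k. rewrite !Ey. exact: cone_kstar.
  move=> i; rewrite Ey. split.
    apply: le_trans (le_addr _ _) (le_trans (Hv1 i) (Hvy i)).
  apply: le_trans (Hup i). apply: mul_ler. exact: le_addr.
split => //.
apply: le_anti; last exact: LB.
apply/(obj_iff x th Hxr theta_neq0) => i. rewrite Ey. split.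
  rewrite -qvec_eq. apply: le_trans (le_addl _ _) (le_trans (Hv1 i) (Hvy i)).
apply: le_trans (Hup i). apply: mul_ler. exact: le_addl. Qed.

Lemma char_fwd (x : 'I_n -> S) :
  feasible p d c B f g x /\ objective p w h x = th ->
  exists v : 'I_n -> S,
        (forall i, qvec p w h d c B f g i ⊕ svec p d c f g i ≼ v i) /\
        (forall i, v i ≼ uvec p w h d c B f g i) /\
        (forall i, x i = (bsum (fun k => kstar B i k ⊗ v k)) ^^ (1 / c i)).
Proof. case=> Hfe Hob. have Hx : regular x := proj1 Hfe.
have [H1 H2] := proj1 (feas_iff x Hx) Hfe.
have H3 := proj1 (obj_iff x th Hx theta_neq0) (eq_ind _ (fun z => z ≼ th) (le_refl _) _ (esym Hob)).
exists (fun i => x i ^^ c i). split; [|split].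
- move=> i. rewrite qvec_eq. apply: add_le; [exact: (H3 i).1 | exact: (H2 i).1].
- move=> k. apply/(v_le_u (fun i => x i ^^ c i) k). rewrite /Zk mul_bsum_le1 => i.
  apply: le_trans (_ : (rg th i ⊕ tinv p d c f g i) ⊗ x i ^^ c i ≼ 1s).
    rewrite -sf_mulA. apply: mul_lel. exact: (cone_kstar_le (y := fun k => x k ^^ c k) H1 i k).
  rewrite mulDl; apply: add_le; [exact: (H3 i).2 | exact: (H2 i).2].
- move=> i. have -> : bsum (fun k => kstar B i k ⊗ x k ^^ c k) = x i ^^ c i.
    apply: le_anti.
      apply: bsum_le => k. exact: (cone_kstar_le (y := fun k => x k ^^ c k) H1 i k).
    apply: le_trans (le_bsum _ i). rewrite -{1}(sf_mul1x (x i ^^ c i)). apply: mul_ler. exact: kstar_diag.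
  by rewrite powK. Qed.

Lemma main_thm :
  (exists x : 'I_n -> S, feasible p d c B f g x /\ objective p w h x = th) /\
  (forall x : 'I_n -> S, feasible p d c B f g x -> th ≼ objective p w h x) /\
  (forall x : 'I_n -> S,
     (feasible p d c B f g x /\ objective p w h x = th) <->
     (exists v : 'I_n -> S,
        (forall i, qvec p w h d c B f g i ⊕ svec p d c f g i ≼ v i) /\
        (forall i, v i ≼ uvec p w h d c B f g i) /\
        (forall i, x i = sf_pow (bsum (fun k => sf_mul (kstar B i k) (v k)))
                                (1 / c i)%R))).
Proof. split; [|split].
- set v := fun k => qvec p w h d c B f g k ⊕ svec p d c f g k.
  exists (fun i => (bsum (fun k => kstar B i k ⊗ v k)) ^^ (1 / c i)).
  apply: (char_bwd _ v) => //.
    move=> i; exact: le_refl.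
  move=> k. apply/(v_le_u v k).
  have HS := proj2 (C_iff th theta_neq0) (le_refl _).
  rewrite /Zk mul_bsum_le1 => i. apply: le_trans HS.
  apply: le_trans (le_bsum _ i). rewrite /v qvec_eq.
  exact: (le_bsum (fun k0 => (rg th i ⊕ tinv p d c f g i) ⊗ kstar B i k0 ⊗ (qg th k0 ⊕ svec p d c f g k0)) k).
- exact: LB.
- move=> x; split; first exact: char_fwd.
  case=> v [H1 [H2 H3]]. exact: char_bwd H1 H2 H3. Qed.

End Problem.
End Basics.

Theorem theorem3 (S : idem_semifield) (n m : nat)
  (p : 'I_n -> 'I_m -> S) (w : 'I_m -> R) (h d : 'I_m -> S)
  (c : 'I_n -> R) (B : 'I_n -> 'I_n -> S) (f g : 'I_n -> S) :
  (1 <= n)%N -> (1 <= m)%N ->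
  (forall i j, p i j <> sf_zero S) ->
  (forall j, (0 < w j)%R) ->
  (forall j, h j <> sf_zero S) ->
  (forall j, d j <> sf_zero S) ->
  (forall i, c i <> 0%R) ->
  regular f -> regular g ->
  (forall i, sle (f i) (g i)) ->
  sle (Tr B) (sf_one S) ->
  sle (bsum (fun i => bsum (fun k =>
         sf_mul (sf_mul (tinv p d c f g i) (kstar B i k)) (svec p d c f g k))))
      (sf_one S) ->
  let th := theta p w h d c B f g in
  (exists x, feasible p d c B f g x /\ objective p w h x = th) /\
  (forall x, feasible p d c B f g x -> sle th (objective p w h x)) /\
  (forall x : 'I_n -> S,
     (feasible p d c B f g x /\ objective p w h x = th) <->
     (exists v : 'I_n -> S,
        (forall i, sle (sf_add (qvec p w h d c B f g i) (svec p d c f g i)) (v i)) /\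
        (forall i, sle (v i) (uvec p w h d c B f g i)) /\
        (forall i, x i = sf_pow (bsum (fun k => sf_mul (kstar B i k) (v k)))
                                (1 / c i)%R))).
Proof.
move=> Hn Hm Hp Hw Hh Hd Hc Hf Hg Hfg HTr Hts th.
exact: (@main_thm S n m p w h d c B f g Hn Hm Hp Hw Hh Hd Hc Hf Hg Hfg Hts HTr).
Qed.
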